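(* Let $n,k,i$ be integers with $n\ge k\ge1$ and $0\le i\le n-k$, and let $(\pi_1,\pi_2,\pi_3)\in\mathcal B_{n,k}^{(i)}$. Then (i) $|\min(\pi_1)\cap\min(\pi_3)|=k$; (ii) $|\mathrm{Sing}(\pi_1)\setminus\min(\pi_3)|=i$; (iii) $|\mathrm{Sing}(\pi_3)\setminus\min(\pi_1)|=n-k-i$.
   Context: Let $[n]=\{1,\dots,n\}$ and let $\Pi_{n,m}$ denote the set of partitions of $[n]$ into $m$ nonempty blocks. For a partition $\pi$, $\min(\pi)$ is the set of minima of its blocks and $\mathrm{Sing}(\pi)$ is the set of elements forming singleton blocks of $\pi$. $\mathcal B_{n,k}^{(i)}$ is the set of triples $(\pi_1,\pi_2,\pi_3)\in\Pi_{n,k+i}\times\Pi_{n,k+i}\times\Pi_{n,n-i}$ such that (i) $\min(\pi_1)=\min(\pi_2)$ and $\mathrm{Sing}(\pi_1)=\mathrm{Sing}(\pi_2)$, and (ii) $\min(\pi_1)\cup\mathrm{Sing}(\pi_3)=\mathrm{Sing}(\pi_1)\cup\min(\pi_3)=[n]$. *)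

(* Defs.v *)
From mathcomp Require Import all_boot.
Set Implicit Arguments. Unset Strict Implicit. Unset Printing Implicit Defensive.

(* The ground set [n] = {1,...,n} is modelled by 'I_n = {0,...,n-1}
   (order-preserving shift by one; only the order matters). *)

Definition set_partition_into (n m : nat) (P : {set {set 'I_n}}) : Prop :=
  partition P [set: 'I_n] /\ #|P| = m.

Definition minP (n : nat) (P : {set {set 'I_n}}) : {set 'I_n} :=
  [set x : 'I_n | [exists B in P, (x \in B) && [forall y in B, x <= y]]].

Definition SingP (n : nat) (P : {set {set 'I_n}}) : {set 'I_n} :=
  [set x : 'I_n | [set x] \in P].

Definition inB (n k i : nat) (p1 p2 p3 : {set {set 'I_n}}) : Prop :=
  [/\ set_partition_into (k + i) p1,
      set_partition_into (k + i) p2,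
      set_partition_into (n - i) p3,
      minP p1 = minP p2 /\ SingP p1 = SingP p2 &
      minP p1 :|: SingP p3 = [set: 'I_n] /\ SingP p1 :|: minP p3 = [set: 'I_n]].

(* Main.v *)
Require Import Defs.
From mathcomp Require Import all_boot zify.

Lemma card_minP (n : nat) (P : {set {set 'I_n}}) :
  partition P [set: 'I_n] -> #|minP P| = #|P|.
Proof.
case/and3P=> /eqP covP triv s0.
have inj : {in minP P &, injective (pblock P)}.
  move=> x y; rewrite !inE => /existsP[B /and3P[BP xB /forallP xm]].
  move=> /existsP[C /and3P[CP yC /forallP ym]].
  rewrite (def_pblock triv BP xB) (def_pblock triv CP yC) => EBC.
  subst C; apply/val_inj/eqP; rewrite eqn_leq.
  by move: (xm y) (ym x); rewrite xB yC /= => -> ->.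
rewrite -(card_in_imset inj); apply: eq_card=> B; apply/imsetP/idP.
  case=> x; rewrite inE => /existsP[C /and3P[CP xC _]] ->.
  by rewrite (def_pblock triv CP xC).
move=> BP.
have: B != set0 by apply: contraNneq s0 => <-.
case/set0Pn=> x0 xB.
case: (arg_minnP (fun x : 'I_n => val x) xB) => x xB0 xm.
have xB' : x \in B := xB0.
exists x; last by rewrite (def_pblock triv BP xB').
rewrite inE; apply/existsP; exists B; rewrite BP xB' /=.
by apply/forallP=> y; apply/implyP=> yB; apply: xm.
Qed.

Lemma Sing_min (n : nat) (P : {set {set 'I_n}}) : SingP P \subset minP P.
Proof.
apply/subsetP=> x; rewrite !inE => xP; apply/existsP; exists [set x].
rewrite xP set11 /=; apply/forallP=> y; apply/implyP; rewrite inE => /eqP ->.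
by [].
Qed.

Theorem lemma12 (n k i : nat) (p1 p2 p3 : {set {set 'I_n}}) :
  1 <= k -> k <= n -> i <= n - k ->
  inB k i p1 p2 p3 ->
  [/\ #|minP p1 :&: minP p3| = k,
      #|SingP p1 :\: minP p3| = i &
      #|SingP p3 :\: minP p1| = n - k - i].
Proof.
move=> _ _ hi [[pa1 c1] _ [pa3 c3] _ [U1 U2]].
have m1 := card_minP _ _ pa1; have m3 := card_minP _ _ pa3.
rewrite c1 in m1; rewrite c3 in m3.
have s1 := Sing_min _ p1; have s3 := Sing_min _ p3.
have E1 : SingP p1 :\: minP p3 = ~: minP p3.
  apply/setP=> x; move/setP: (U2) => /(_ x); rewrite in_setU in_setD in_setC in_setT.
  by case: (x \in SingP p1); case: (x \in minP p3).
have E3 : SingP p3 :\: minP p1 = ~: minP p1.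
  apply/setP=> x; move/setP: (U1) => /(_ x); rewrite in_setU in_setD in_setC in_setT.
  by case: (x \in SingP p3); case: (x \in minP p1).
have U : minP p1 :|: minP p3 = [set: 'I_n].
  apply/eqP; rewrite eqEsubset subsetT /= -U1.
  by apply: setUS.
have cU := cardsU (minP p1) (minP p3).
rewrite U cardsT card_ord m1 m3 in cU.
have cn : n = #|[set: 'I_n]| by rewrite cardsT card_ord.
have C1 := cardsC (minP p1); have C3 := cardsC (minP p3).
rewrite card_ord m1 in C1; rewrite card_ord m3 in C3.
rewrite E1 E3.
split.
- have: #|minP p1 :&: minP p3| <= k + i by rewrite -m1 subset_leq_card // subsetIl.
  lia.
- lia.
- lia.
Qed.
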